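(* Let $G$ be a finite directed graph and $R\subseteq V(G)$. Let $F_i$ and $F_k$ be maximal faces of $\mathrm{DT}_R(G)$, and let $(x\rightarrow y)\in F_i\setminus F_k$ be an edge that is nice in $\mathrm{DT}_R(G)$. Then there is a maximal face $F_j$ of $\mathrm{DT}_R(G)$ and an $e\in F_k$ such that $F_i\cap F_k\subseteq F_j\cap F_k=F_k\setminus\{e\}$.
   Context: A directed forest in $G$ is a set of edges of $G$ which, viewed as a graph on $V(G)$, is acyclic and has at most one edge directed to each vertex; its roots are the vertices with no forest edge directed to them. $\mathrm{DT}(G)$ is the simplicial complex with vertex set $E(G)$ whose simplices are the directed forests; $\mathrm{DT}_R(G)$ is the subcomplex generated by the directed forests with root set exactly $R$. An edge $(x\rightarrow y)$ of $G$ is nice in a subcomplex $\Delta$ of $\mathrm{DT}(G)$ if (i) there is an edge $(z\rightarrow y)$ in $\Delta$ with $z\ne x$, and (ii) every forest $F\in\Delta$ without an edge directed to $y$ satisfies $F\cup\{(x\rightarrow y)\}\in\Delta$. *)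

(* Defs.v *)
From mathcomp Require Import all_boot.
Set Implicit Arguments. Unset Strict Implicit. Unset Printing Implicit Defensive.

(* A finite directed graph G is given by a finite vertex type V (V(G) = all of V)
   and an edge set E : {set V * V}; the pair (x, y) is the edge (x -> y).
   Sets of edges are elements of {set V * V}. *)

Section DT.
Variable V : finType.
Implicit Types (E F : {set V * V}) (R : {set V}).

Definition joins (e : V * V) (a b : V) : bool :=
  ((e.1 == a) && (e.2 == b)) || ((e.1 == b) && (e.2 == a)).

(* An (undirected) cycle in the edge set F: pairwise distinct vertices
   v_0, ..., v_{k-1} (k >= 1) and pairwise distinct edges e_0, ..., e_{k-1} of F
   such that e_i joins v_i and v_{(i+1) mod k}.  (k = 1 : a loop; k = 2 : two
   distinct edges between the same two vertices, e.g. (x->y) and (y->x).) *)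
Definition undirected_cycle F (vs : seq V) (es : seq (V * V)) : Prop :=
  [/\ 0 < size vs, size es = size vs, uniq vs, uniq es &
      {subset es <= F} /\
      forall (x0 : V) i, i < size vs ->
        joins (nth (x0, x0) es i) (nth x0 vs i) (nth x0 vs (i.+1 %% size vs))].

Definition acyclic F : Prop := forall vs es, ~ undirected_cycle F vs es.

Definition directed_forest E F : Prop :=
  [/\ F \subset E, acyclic F &
      forall y : V, #|[set e in F | e.2 == y]| <= 1].

Definition roots F : {set V} := [set v | [forall e in F, e.2 != v]].

Definition DT E (F : {set V * V}) : Prop := directed_forest E F.

Definition DT_R E R (F : {set V * V}) : Prop :=
  exists F', [/\ directed_forest E F', roots F' = R & F \subset F'].

Definition maximal_face (Delta : {set V * V} -> Prop) F : Prop :=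
  Delta F /\ forall F', Delta F' -> F \subset F' -> F' = F.

Definition nice E (Delta : {set V * V} -> Prop) (x y : V) : Prop :=
  [/\ (x, y) \in E,
      (exists z : V, z != x /\ Delta [set (z, y)]) &
      forall F, Delta F -> [forall e in F, e.2 != y] -> Delta ((x, y) |: F)].
End DT.

(* Main.v *)
Require Import Defs.
From mathcomp Require Import all_boot.

Set Implicit Arguments. Unset Strict Implicit.
Section H.
Variable V : finType.
Implicit Types (E F G : {set V * V}) (R : {set V}).

Lemma uniq_in F (e1 e2 : V * V) :
  (forall y : V, #|[set e in F | e.2 == y]| <= 1) ->
  e1 \in F -> e2 \in F -> e1.2 = e2.2 -> e1 = e2.
Proof.
move=> H h1 h2 he.
have /card_le1_eqP P := H e1.2.
apply: P; by rewrite inE ?h1 ?h2 ?he eqxx.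
Qed.

Lemma not_root F v : v \notin Defs.roots F -> exists2 e, e \in F & e.2 = v.
Proof.
rewrite inE => /forallPn [e]; rewrite negb_imply negbK => /andP [h /eqP h2].
by exists e.
Qed.

Lemma forest_max E R F :
  directed_forest E F -> Defs.roots F = R -> maximal_face (DT_R E R) F.
Proof.
move=> hF hR; split; first by exists F; split.
move=> F2 [G [hG hGR sub2]] sub; apply/eqP; rewrite eqEsubset andbC sub /=.
apply: (subset_trans sub2); apply/subsetP => e eG.
have : e.2 \notin Defs.roots G.
  rewrite inE; apply/forallPn; exists e; by rewrite eG eqxx.
rewrite hGR -hR => /not_root [e' e'F he'].
have e'G : e' \in G by apply: (subsetP sub2); apply: (subsetP sub).
case: hG => _ _ c.
by rewrite (uniq_in c eG e'G (esym he')).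
Qed.

Lemma max_forest E R F :
  maximal_face (DT_R E R) F -> directed_forest E F /\ Defs.roots F = R.
Proof.
move=> [[F' [h1 h2 h3]] hm].
have := hm F' (ex_intro _ F' (And3 h1 h2 (subxx _))) h3.
by move=> <-.
Qed.
End H.

Theorem lemma2p8 (V : finType) (E : {set V * V}) (R : {set V})
    (Fi Fk : {set V * V}) (x y : V) :
  maximal_face (DT_R E R) Fi ->
  maximal_face (DT_R E R) Fk ->
  (x, y) \in Fi :\: Fk ->
  nice E (DT_R E R) x y ->
  exists Fj : {set V * V}, exists2 e : V * V,
    maximal_face (DT_R E R) Fj /\ e \in Fk &
    Fi :&: Fk \subset Fj :&: Fk /\ Fj :&: Fk = Fk :\ e.
Proof.
move=> /max_forest [[_ _ ci] _] mk /setDP [xyi xyk] [_ [z [_ [F' [_ hR' sub']]]] hn].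
have [[fk1 fk2 ck] hRk] := max_forest mk.
have yR : y \notin R.
  rewrite -hR' inE; apply/forallPn; exists (z, y).
  by rewrite (subsetP sub') ?set11 // eqxx.
move: yR; rewrite -hRk => /not_root [e ek he].
have exy : e != (x, y) by apply/eqP => eE; rewrite -eE ek in xyk.
have ei : e \notin Fi.
  apply/negP => ei; move/eqP: exy; apply; apply: (uniq_in ci) => //.
have hD : DT_R E R (Fk :\ e).
  exists Fk; split => //; exact: subD1set.
have hy : [forall e0 in Fk :\ e, e0.2 != y].
  apply/forall_inP => e0 /setD1P [ne0 e0k]; apply/eqP => h.
  by move/eqP: ne0; apply; apply: (uniq_in ck) => //; rewrite h.
have [G [hG hGR subG]] := hn _ hD hy.
have eG : e \notin G.
  apply/negP => eG; move/eqP: exy; apply; case: hG => _ _ c.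
  apply: (uniq_in c) => //; first by apply: (subsetP subG); rewrite setU11.
have sG : Fk :\ e \subset G by apply: subset_trans subG; apply: subsetUr.
have eq : G :&: Fk = Fk :\ e.
  apply/setP => a; rewrite !inE; case: (a =P e) => [->|ne] /=.
    by rewrite (negbTE eG).
  case ak: (a \in Fk); rewrite ?andbT ?andbF //.
  by apply: (subsetP sG); rewrite !inE ak andbT; apply/eqP.
exists G, e; first by split => //; rewrite hRk; exact: (forest_max hG hGR).
split => //; rewrite eq; apply/subsetP => a; rewrite !inE => /andP [ai ak].
rewrite ak andbT; apply/eqP => h; by rewrite -h ai in ei.
Qed.
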